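(* Let $K$ be a positive definite kernel on $\Omega\subset\mathbb{R}^d$, let $\lambda>0$, let $x_1,\dots,x_n\in\Omega$ be pairwise distinct, $X_k:=\{x_1,\dots,x_k\}$ for $0\le k\le n$, and let $f\in\mathcal{H}_\lambda$. With the functions $v_k^\lambda,v_k$ ($1\le k\le n$) defined in the context, it holds $$s_n^\lambda(f)=\sum_{k=1}^n (f,v_k^\lambda)_{\mathcal{H}_\lambda}\,v_k=s_{n-1}^\lambda(f)+(f,v_n^\lambda)_{\mathcal{H}_\lambda}\,v_n .$$ Moreover, if $f\in\mathcal{H}$, then $(f,v_k)_{\mathcal{H}}=(f,v_k^\lambda)_{\mathcal{H}_\lambda}$ for $1\le k\le n$, and therefore $$s_n^\lambda(f)=\sum_{k=1}^n (f,v_k)_{\mathcal{H}}\,v_k=s_{n-1}^\lambda(f)+(f,v_n)_{\mathcal{H}}\,v_n .$$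
   Context: A kernel $K:\Omega\times\Omega\to\mathbb{R}$ is positive definite if it is symmetric and all kernel matrices $(K(x_i,x_j))_{i,j}$ on pairwise distinct points are positive semidefinite (strictly positive definite: positive definite). $\mathcal{H}=\mathcal{H}_K(\Omega)$ is the native space (reproducing kernel Hilbert space) of $K$. Let $\delta(x,y)=1$ if $x=y$ and $0$ otherwise, $K_\lambda(x,y):=K(x,y)+\lambda\delta(x,y)$ (a strictly positive definite kernel for $\lambda>0$), and $\mathcal{H}_\lambda$ its native space. For pairwise distinct points $Y=\{y_1,\dots,y_m\}\subset\Omega$ with kernel matrix $A=(K(y_i,y_j))_{i,j}$ and a function $f:\Omega\to\mathbb{R}$, the regularized interpolant is $s^\lambda(f,Y):=\sum_{j=1}^m\alpha_jK(\cdot,y_j)$ with $(A+\lambda I)\alpha=(f(y_1),\dots,f(y_m))^T$; write $s_k^\lambda(f):=s^\lambda(f,X_k)$, with $s_0^\lambda(f):=0$. Let $A_n=(K(x_i,x_j))_{i,j=1}^n$, let $A_n+\lambda I=LL^T$ be the Cholesky factorization ($L$ lower triangular with positive diagonal), and $(\beta_{jk})_{j,k=1}^n:=L^{-T}$. Define $v_k^\lambda:=\sum_{j=1}^n\beta_{jk}K_\lambda(\cdot,x_j)$ (the Newton basis of $X_n$ in $\mathcal{H}_\lambda$) and $v_k:=\sum_{j=1}^n\beta_{jk}K(\cdot,x_j)$. *)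

(* Defs.v *)
From HB Require Import structures.
From mathcomp Require Import all_boot all_order all_algebra.
From mathcomp Require Import boolp classical_sets reals.
Set Implicit Arguments. Unset Strict Implicit. Unset Printing Implicit Defensive.
Import Order.TTheory GRing.Theory Num.Theory.
Local Open Scope ring_scope.

Section Defs.
Variable R : realType.

Definition Dom (d : nat) (Om : set 'rV[R]_d) := {x : 'rV[R]_d | Om x}.

Variable T : Type.

Definition kmat (K : T -> T -> R) (m : nat) (y : 'I_m -> T) : 'M[R]_m :=
  \matrix_(i < m, j < m) K (y i) (y j).

Definition psd_mx (m : nat) (A : 'M[R]_m) : Prop :=
  forall c : 'cV[R]_m, 0 <= (c^T *m A *m c) 0 0.

Definition pd_kernel (K : T -> T -> R) : Prop :=
  (forall x y, K x y = K y x) /\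
  (forall (m : nat) (y : 'I_m -> T), injective y -> psd_mx (kmat K y)).

Definition delta (x y : T) : R := if asbool (x = y) then 1 else 0.
Definition Klam (K : T -> T -> R) (lam : R) : T -> T -> R :=
  fun x y => K x y + lam * delta x y.

(* Such a space is unique (= H_K). *)
Record native_space (K : T -> T -> R) (H : set (T -> R))
    (ip : (T -> R) -> (T -> R) -> R) : Prop := {
  ns_0 : H (fun _ => 0);
  ns_add : forall f g, H f -> H g -> H (fun z => f z + g z);
  ns_scale : forall (a : R) f, H f -> H (fun z => a * f z);
  ns_sym : forall f g, H f -> H g -> ip f g = ip g f;
  ns_linl : forall (a b : R) f g h, H f -> H g -> H h ->
     ip (fun z => a * f z + b * g z) h = a * ip f h + b * ip g h;
  ns_pos : forall f, H f -> 0 <= ip f f;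
  ns_def : forall f, H f -> ip f f = 0 -> f = (fun _ => 0);
  ns_complete : forall u : nat -> (T -> R), (forall k, H (u k)) ->
     (forall e : R, 0 < e -> exists N, forall p q, (N <= p)%N -> (N <= q)%N ->
        ip (fun z => u p z - u q z) (fun z => u p z - u q z) < e) ->
     exists2 g, H g & (forall e : R, 0 < e -> exists N, forall p, (N <= p)%N ->
        ip (fun z => u p z - g z) (fun z => u p z - g z) < e);
  ns_kernel : forall x, H (fun z => K z x);
  ns_repr : forall f x, H f -> ip f (fun z => K z x) = f x
}.

Definition reg_interp (K : T -> T -> R) (lam : R) (f : T -> R)
    (m : nat) (y : 'I_m -> T) : T -> R :=
  let alpha := invmx (kmat K y + lam%:M) *m (\col_(i < m) f (y i)) in
  fun z => \sum_(j < m) alpha j ord0 * K z (y j).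

(* s_k^lam(f) = s^lam(f, X_k) with X_k = {x_0, ..., x_(k-1)} (0-based);
   s_0^lam(f) = 0 (empty sum). *)
Definition s_k (K : T -> T -> R) (lam : R) (f : T -> R) (x : nat -> T)
    (k : nat) : T -> R :=
  reg_interp K lam f (fun i : 'I_k => x (nat_of_ord i)).

(* Newton-type functions built from beta = L^{-T}:
   sum_j beta_jk G(., x_j) with G = K (v_k) or G = K_lam (v_k^lam) *)
Definition newton_fun (G : T -> T -> R) (N : nat) (x : nat -> T)
    (beta : 'M[R]_N) (k : 'I_N) : T -> R :=
  fun z => \sum_(j < N) beta j k * G z (x (nat_of_ord j)).

End Defs.

(* Main.v *)
Require Import Defs.
From HB Require Import structures.
From mathcomp Require Import all_boot all_order all_algebra.
From mathcomp Require Import boolp classical_sets reals.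
From mathcomp Require Import ring.
Import Order.TTheory GRing.Theory Num.Theory.
Local Open Scope ring_scope.

Lemma ip_sum (R : realType) (T : Type) (K : T -> T -> R) (H : set (T -> R))
  (ip : (T -> R) -> (T -> R) -> R) (hH : native_space K H ip) (f : T -> R)
  (m : nat) (a : 'I_m -> R) (g : 'I_m -> T -> R) :
  H f -> (forall j, H (g j)) ->
  H (fun z => \sum_(j < m) a j * g j z) /\
  ip f (fun z => \sum_(j < m) a j * g j z) = \sum_(j < m) a j * ip f (g j).
Proof.
move=> Hf Hg; elim: m a g Hg => [|m IH] a g Hg.
  have E : (fun z : T => \sum_(j < 0) a j * g j z) =
           (fun z => 0 * f z + 0 * f z).
    by apply: funext => z; rewrite big_ord0 !mul0r addr0.
  rewrite E big_ord0; split.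
    rewrite -E; under eq_fun do rewrite big_ord0; exact: ns_0 hH.
  by rewrite (ns_sym hH) ?(ns_linl hH) // ?mul0r ?addr0 // -E;
    under eq_fun do rewrite big_ord0; exact: ns_0 hH.
have [IH1 IH2] := IH (fun j => a (widen_ord (leqnSn m) j))
   (fun j => g (widen_ord (leqnSn m) j)) (fun j => Hg _).
have E : (fun z : T => \sum_(j < m.+1) a j * g j z) =
   (fun z => 1 * (\sum_(j < m) a (widen_ord (leqnSn m) j) *
           g (widen_ord (leqnSn m) j) z) + a ord_max * g ord_max z).
  by apply: funext => z; rewrite big_ord_recr mul1r.
rewrite E; split.
  apply: (ns_add hH); first by apply: (ns_scale hH).
  by apply: (ns_scale hH).
have HS : H (fun z => 1 * (\sum_(j < m) a (widen_ord (leqnSn m) j) *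
           g (widen_ord (leqnSn m) j) z) + a ord_max * g ord_max z).
  by apply: (ns_add hH); apply: (ns_scale hH).
rewrite (ns_sym hH Hf HS) (ns_linl hH 1 (a ord_max) IH1 (Hg ord_max) Hf).
rewrite big_ord_recr /= mul1r (ns_sym hH IH1 Hf) IH2 (ns_sym hH (Hg _) Hf).
by [].
Qed.
Arguments ip_sum {R T K H ip} hH {f m} a g.

(* The number of points is n.+1 (>= 1), points x_0, ..., x_n (0-based). *)
Theorem proposition2p2 (R : realType) (d : nat) (Om : set 'rV[R]_d)
    (K : Dom Om -> Dom Om -> R) (hK : pd_kernel K)
    (lam : R) (hlam : 0 < lam)
    (n : nat) (x : nat -> Dom Om)
    (hx : forall i j : nat, (i < n.+1)%N -> (j < n.+1)%N -> x i = x j -> i = j)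
    (H : set (Dom Om -> R)) (ip : (Dom Om -> R) -> (Dom Om -> R) -> R)
    (hH : native_space K H ip)
    (Hl : set (Dom Om -> R)) (ipl : (Dom Om -> R) -> (Dom Om -> R) -> R)
    (hHl : native_space (Klam K lam) Hl ipl)
    (L : 'M[R]_n.+1)
    (hLlow : forall i j : 'I_n.+1, (i < j)%N -> L i j = 0)
    (hLdiag : forall i : 'I_n.+1, 0 < L i i)
    (hLchol : kmat K (fun i : 'I_n.+1 => x (nat_of_ord i)) + lam%:M = L *m L^T)
    (f : Dom Om -> R) (hf : Hl f) :
  let beta := invmx (L^T) in
  let v := newton_fun K x beta in
  let vl := newton_fun (Klam K lam) x beta in
  (s_k K lam f x n.+1 = (fun z => \sum_(k < n.+1) ipl f (vl k) * v k z) /\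
   s_k K lam f x n.+1 =
     (fun z => s_k K lam f x n z + ipl f (vl ord_max) * v ord_max z)) /\
  (H f ->
   (forall k : 'I_n.+1, ip f (v k) = ipl f (vl k)) /\
   s_k K lam f x n.+1 = (fun z => \sum_(k < n.+1) ip f (v k) * v k z) /\
   s_k K lam f x n.+1 =
     (fun z => s_k K lam f x n z + ip f (v ord_max) * v ord_max z)).

Proof.
move=> beta v vl.
have trigU : forall m (M : 'M[R]_m), (forall i j : 'I_m, (i < j)%N -> M i j = 0) ->
    (forall i, 0 < M i i) -> M \in unitmx.
  move=> m M h1 h2; rewrite unitmxE det_trig; last first.
    by apply/forallP => i; apply/forallP => j; apply/implyP => hij; apply/eqP; apply: h1.
  rewrite unitfE; apply: lt0r_neq0; apply: prodr_gt0 => i _; exact: h2.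
have hLu : L \in unitmx by apply: trigU.
have hLTu : L^T \in unitmx by rewrite unitmx_tr.
have hbL : L^T *m beta = 1%:M by rewrite mulmxV.
have hLb : L *m beta^T = 1%:M.
  by rewrite -{1}(trmxK L) -trmx_mul mulVmx // trmx1.
set fv := \col_(i < n.+1) f (x i).
set c := beta^T *m fv.
have Fl : forall k, ipl f (vl k) = c k 0.
  move=> k; rewrite /vl /newton_fun.
  have [_ ->] := ip_sum hHl (fun j => beta j k)
      (fun j z => Klam K lam z (x (nat_of_ord j))) hf (fun j => ns_kernel hHl _).
  rewrite /c mxE; apply: eq_bigr => j _.
  by rewrite (ns_repr hHl _ hf) !mxE.
have F : H f -> forall k, ip f (v k) = c k 0.
  move=> hf' k; rewrite /v /newton_fun.
  have [_ ->] := ip_sum hH (fun j => beta j k)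
      (fun j z => K z (x (nat_of_ord j))) hf' (fun j => ns_kernel hH _).
  rewrite /c mxE; apply: eq_bigr => j _.
  by rewrite (ns_repr hH _ hf') !mxE.
have G : forall w : 'cV[R]_n.+1, (fun z => \sum_k w k 0 * v k z) =
    (fun z => \sum_(j < n.+1) (beta *m w) j 0 * K z (x j)).
  move=> w; apply: funext => z; rewrite /v /newton_fun.
  under eq_bigr do rewrite mulr_sumr.
  rewrite exchange_big; apply: eq_bigr => j _; rewrite mxE mulr_suml.
  by apply: eq_bigr => k _; ring.
have hs : s_k K lam f x n.+1 = (fun z => \sum_(j < n.+1) (beta *m c) j 0 * K z (x j)).
  rewrite /s_k /reg_interp hLchol.
  have -> : invmx (L *m L^T) *m \col_(i < n.+1) f (x i) = beta *m c => //.
  have hu : L *m L^T \in unitmx by rewrite unitmx_mul hLu hLTu.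
  rewrite -{1}(mulKmx hu (beta *m c)); congr (_ *m _).
  by rewrite -mulmxA (mulmxA L^T) hbL mul1mx /c mulmxA hLb mul1mx.
have P1 : s_k K lam f x n.+1 = (fun z => \sum_k ipl f (vl k) * v k z).
  rewrite hs -G; apply: funext => z; apply: eq_bigr => k _; by rewrite Fl.
have hbmax : forall k : 'I_n.+1, k != ord_max -> beta ord_max k = 0.
  move=> k hk.
  have e : (L^T *m beta) ord_max k = 0 by rewrite hbL mxE eq_sym (negbTE hk) mulr0n.
  move: e; rewrite mxE big_ord_recr /= big1 ?add0r; last first.
    by move=> j _; rewrite mxE (hLlow (widen_ord (leqnSn n) j) ord_max (ltn_ord j)) mul0r.
  rewrite mxE => /eqP; rewrite mulf_eq0 (negbTE (lt0r_neq0 (hLdiag _))) /= => /eqP.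
  done.
pose pc : 'cV[R]_n.+1 := \col_k (if (k < n)%N then c k 0 else 0).
pose ga := beta *m pc.
have gamax : ga ord_max 0 = 0.
  rewrite mxE big1 // => k _; rewrite mxE; case: ifP => hk.
    rewrite hbmax ?mul0r //; apply/eqP => e; move: hk; rewrite e /= ltnn.
    done.
  by rewrite mulr0.
pose cn := \col_(j < n) ga (widen_ord (leqnSn n) j) 0.
have hsn_sum : (fun z => \sum_(k < n) c (widen_ord (leqnSn n) k) 0 * v (widen_ord (leqnSn n) k) z)
   = (fun z => \sum_(j < n) cn j 0 * K z (x j)).
  transitivity (fun z => \sum_k pc k 0 * v k z).
    apply: funext => z; rewrite big_ord_recr /= !mxE /= ltnn mul0r addr0.
    by apply: eq_bigr => k _; rewrite [pc _ _]mxE /= ltn_ord.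
  rewrite G; apply: funext => z; rewrite big_ord_recr /= gamax mul0r addr0.
  by apply: eq_bigr => j _; rewrite [cn _ _]mxE.
pose Mn := kmat K (fun i : 'I_n => x (nat_of_ord i)) + lam%:M.
pose Ln : 'M[R]_n := \matrix_(i, j) L (widen_ord (leqnSn n) i) (widen_ord (leqnSn n) j).
have hMe : forall i j : 'I_n, Mn i j = (L *m L^T) (widen_ord (leqnSn n) i) (widen_ord (leqnSn n) j).
  by move=> i j; rewrite -hLchol !mxE /=.
have hMn : Mn = Ln *m Ln^T.
  apply/matrixP => i j; rewrite hMe !mxE big_ord_recr /=.
  rewrite (hLlow (widen_ord (leqnSn n) i) ord_max (ltn_ord i)) mul0r addr0.
  by apply: eq_bigr => k _; rewrite !mxE.
have hLnu : Ln \in unitmx.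
  apply: trigU => [i j hij|i]; rewrite mxE; [exact: hLlow | exact: hLdiag].
have hMu : Mn \in unitmx by rewrite hMn unitmx_mul hLnu unitmx_tr hLnu.
have key : Mn *m cn = \col_(i < n) f (x i).
  apply/matrixP => i j; rewrite (ord1 j).
  have e1 : (Mn *m cn) i 0 = ((L *m L^T) *m ga) (widen_ord (leqnSn n) i) 0.
    rewrite [LHS]mxE [RHS]mxE big_ord_recr /= gamax mulr0 addr0.
    by apply: eq_bigr => k _; rewrite hMe [cn _ _]mxE.
  have e2 : (L *m L^T) *m ga = L *m pc by rewrite /ga -mulmxA (mulmxA L^T) hbL mul1mx.
  have e3 : (L *m pc) (widen_ord (leqnSn n) i) 0 = (L *m c) (widen_ord (leqnSn n) i) 0.
    rewrite [LHS]mxE [RHS]mxE !big_ord_recr /= (hLlow (widen_ord (leqnSn n) i) ord_max (ltn_ord i)) !mul0r !addr0.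
    by apply: eq_bigr => k _; rewrite mxE /= ltn_ord.
  have e4 : L *m c = fv by rewrite /c mulmxA hLb mul1mx.
  by rewrite e1 e2 e3 e4 !mxE.
have hcn : invmx Mn *m \col_(i < n) f (x i) = cn by rewrite -key mulKmx.
have hsn : s_k K lam f x n = (fun z => \sum_(k < n) c (widen_ord (leqnSn n) k) 0 * v (widen_ord (leqnSn n) k) z).
  rewrite hsn_sum /s_k /reg_interp -/Mn hcn //.
split.
  split; first exact: P1.
  rewrite P1 hsn; apply: funext => z; rewrite big_ord_recr /=; congr (_ + _).
  by apply: eq_bigr => k _; rewrite Fl.
move=> hHf; have Fe : forall k, ip f (v k) = ipl f (vl k) by move=> k; rewrite F // Fl.
split; first exact: Fe.
split.
  rewrite P1; apply: funext => z; apply: eq_bigr => k _; by rewrite Fe.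
rewrite hs -G hsn; apply: funext => z; rewrite big_ord_recr /= F //.
Qed.
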